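(* Let $f:\mathbb{N}^k\to\mathbb{N}$ with $k\ge1$. The following are equivalent: (a) $f\notin\mathscr{C}_{I_{\bar d=0}}$; (b) some shadow of $f$ is minimal; (c) some shadow of $f$ is bad; (d) some shadow of $f$ is not in $\mathscr{C}_{I_{\bar d=0}}$.
   Context: $\mathbb{N}=\{0,1,2,\dots\}$. For $A\subseteq\mathbb{N}$, $\bar d(A)=\limsup_{n\to\infty}\frac{|A\cap[0,n)|}{n}$. $\mathscr{C}_{I_{\bar d=0}}$ is the set of all finitary functions $f:\mathbb{N}^k\to\mathbb{N}$ ($k\ge1$) such that $\bar d(f[A^k])=0$ whenever $\bar d(A)=0$. For $f:\mathbb{N}^k\to\mathbb{N}$, a permutation $\pi$ of $\{1,\dots,k\}$ and $\bar a=(a_1,\dots,a_\ell)\in\mathbb{N}^\ell$ with $0\le\ell<k$, the shadow $f_{\pi,\bar a}$ is the $(k-\ell)$-ary function $(y_1,\dots,y_{k-\ell})\mapsto f_\pi(a_1,\dots,a_\ell,y_1,\dots,y_{k-\ell})$, where $f_\pi(x_1,\dots,x_k)=f(x_{\pi(1)},\dots,x_{\pi(k)})$. The shadows with $\ell>0$ are proper; those with $\ell=0$ (the functions $f_\pi$, including $f$ itself) are improper; ''shadow'' means proper or improper shadow. $f$ is minimal if $f\notin\mathscr{C}_{I_{\bar d=0}}$ and every proper shadow of $f$ lies in $\mathscr{C}_{I_{\bar d=0}}$. $f$ is bad if there exists a rational $\varepsilon>0$ such that for every $i\in\mathbb{N}$ there are $n,t\ge i$ and $A\subseteq[i,n)$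 with $|A\cap[0,r)|\le\frac{r}{2^i}$ for all $r\in\mathbb{N}$ and $|f[A^k]\cap[0,t)|\ge\varepsilon t$. *)

(* Defs.v *)
From HB Require Import structures.
From mathcomp Require Import all_boot all_order all_algebra all_fingroup.
From mathcomp Require Import all_classical all_reals.
From mathcomp Require Import topology normedtype sequences Rstruct.
Set Implicit Arguments. Unset Strict Implicit. Unset Printing Implicit Defensive.
Import Order.TTheory GRing.Theory Num.Theory.
Local Open Scope classical_set_scope.
Local Open Scope ring_scope.

Definition cnt (A : set nat) (n : nat) : nat := (\sum_(i < n) (`[< A i >] : nat))%N.

Definition dbar (A : set nat) : \bar Rdefinitions.R :=
  limn_esup (fun n => ((cnt A n)%:R / n%:R : Rdefinitions.R)%:E).

Definition fimage (k : nat) (f : k.-tuple nat -> nat) (A : set nat) : set nat :=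
  [set m | exists x : k.-tuple nat, (forall i : 'I_k, A (tnth x i)) /\ f x = m].

Definition inC (k : nat) (f : k.-tuple nat -> nat) : Prop :=
  (0 < k)%N /\ forall A : set nat, dbar A = 0%E -> dbar (fimage f A) = 0%E.

Definition fperm (k : nat) (f : k.-tuple nat -> nat) (pi : 'S_k) : k.-tuple nat -> nat :=
  fun x => f [tuple tnth x (pi i) | i < k].

Definition shadow (k : nat) (f : k.-tuple nat -> nat) (pi : 'S_k) (l : nat)
  (a : l.-tuple nat) : (k - l).-tuple nat -> nat :=
  fun y => fperm f pi [tuple nth 0%N (a ++ y) i | i < k].

(* some shadow (proper or improper, i.e. 0 <= l < k) of f satisfies P *)
Definition some_shadow (P : forall n : nat, (n.-tuple nat -> nat) -> Prop)
  (k : nat) (f : k.-tuple nat -> nat) : Prop :=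
  exists (l : nat) (pi : 'S_k) (a : l.-tuple nat), (l < k)%N /\ P (k - l)%N (shadow f pi a).

Definition minimal (k : nat) (f : k.-tuple nat -> nat) : Prop :=
  ~ inC f /\
  forall (l : nat) (pi : 'S_k) (a : l.-tuple nat), (0 < l < k)%N -> inC (shadow f pi a).

Definition bad (k : nat) (f : k.-tuple nat -> nat) : Prop :=
  exists eps : rat, 0 < eps /\
  forall i : nat, exists (n t : nat) (A : set nat),
    [/\ (i <= n)%N, (i <= t)%N,
        (forall x, A x -> (i <= x < n)%N),
        (forall r : nat, (cnt A r)%:R <= r%:R / (2 ^ i)%:R :> rat) &
        eps * t%:R <= (cnt (fimage f A) t)%:R].

(* Main.v *)
Require Import Defs.
From mathcomp Require Import all_boot all_order all_algebra all_fingroup.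
From HB Require Import structures.
From mathcomp Require Import all_classical all_reals.
From mathcomp Require Import ereal topology normedtype sequences Rstruct.
From mathcomp Require Import zify ring lra.
Set Implicit Arguments. Unset Strict Implicit. Unset Printing Implicit Defensive.
Import Order.TTheory GRing.Theory Num.Theory.

Section Part_S1.

Local Open Scope classical_set_scope.
Local Open Scope ring_scope.

Definition dz (A : set nat) := forall m : nat, exists N : nat,
  forall n : nat, (N <= n)%N -> (m.+1 * cnt A n <= n)%N.

Lemma dbarE (A : set nat) : dbar A = ereal_inf (range (esups
   (fun n => ((cnt A n)%:R / n%:R : Rdefinitions.R)%:E))).
Proof.
rewrite /dbar limn_esup_lim; apply: cvg_lim => //; exact: cvg_esups_inf.
Qed.

Lemma cnt_le (A : set nat) n : (cnt A n <= n)%N.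
Proof.
rewrite /cnt -[X in (_ <= X)%N](card_ord n) -sum1_card.
by apply: leq_sum => i _; exact: leq_b1.
Qed.

Lemma dbar0_dz (A : set nat) : dbar A = 0%E <-> dz A.
Proof.
rewrite dbarE; split.
- move=> H m.
  have e0 : (0 : Rdefinitions.R) < (m.+1%:R)^-1 by rewrite invr_gt0 ltr0n.
  have : (ereal_inf (range (esups (fun n => ((cnt A n)%:R / n%:R : Rdefinitions.R)%:E))) < ((m.+1%:R)^-1)%:E)%E.
    by rewrite H lte_fin.
  move=> /ereal_inf_lt [y [n _ <-]] Hy.
  exists n => k nk.
  have : (((cnt A k)%:R / k%:R : Rdefinitions.R)%:E < ((m.+1%:R)^-1)%:E)%E.
    apply: (le_lt_trans _ Hy); apply: ereal_sup_ubound; by exists k.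
  rewrite lte_fin.
  case: k nk => [|k] nk.
    by rewrite /cnt big_ord0 muln0.
  rewrite ltr_pdivrMr ?ltr0n // mulrC ltr_pdivlMr ?ltr0n // => h.
  apply/ltnW; rewrite -(ltr_nat Rdefinitions.R) natrM mulrC; exact: h.
- move=> H; apply/eqP; rewrite eq_le; apply/andP; split; last first.
    apply: le_ereal_inf_tmp => _ [n _ <-].
    apply: (@le_trans _ _ (((cnt A n)%:R / n%:R : Rdefinitions.R)%:E)).
      by rewrite lee_fin divr_ge0.
    by apply: ereal_sup_ubound; exists n => /=.
  apply/lee_addgt0Pr => e e0; rewrite add0e.
  have [N HN] := H (Num.Def.trunc (e^-1)).
  apply: (@le_trans _ _ (esups (fun n => ((cnt A n)%:R / n%:R : Rdefinitions.R)%:E) N)).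
    by apply: ereal_inf_lbound; exists N.
  apply: ge_ereal_sup => _ [k /= Nk <-].
  rewrite lee_fin.
  case: k Nk => [|k] Nk.
    by rewrite /cnt big_ord0 mul0r ltW.
  idtac.
  rewrite ler_pdivrMr ?ltr0n //.
  have h1 := HN _ Nk.
  have h2 := truncnS_gt (e^-1).
  set t := Num.Def.trunc (e^-1) in h1 h2 *.
  have h3 : (t.+1 * cnt A k.+1)%:R <= (k.+1)%:R :> Rdefinitions.R by rewrite ler_nat.
  rewrite natrM in h3.
  have h4 : 1 <= e * t.+1%:R.
    by have := ler_wpM2l (ltW e0) (ltW h2); rewrite mulfV ?gt_eqF.
  apply: (le_trans _ (ler_wpM2l (ltW e0) h3)).
  rewrite mulrA; apply: (le_trans _ (ler_wpM2r (ler0n _ _) h4)).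
  by rewrite mul1r.
Qed.

End Part_S1.

Section Part_S2.

Local Open Scope classical_set_scope.

Lemma cntS (A : set nat) n : cnt A n.+1 = (cnt A n + `[< A n >])%N.
Proof. by rewrite /cnt big_ord_recr. Qed.

Lemma cnt0 (A : set nat) : cnt A 0 = 0%N.
Proof. by rewrite /cnt big_ord0. Qed.

Lemma cnt_sub2 (A B C : set nat) n :
  (forall v, (v < n)%N -> A v -> B v \/ C v) -> (cnt A n <= cnt B n + cnt C n)%N.
Proof.
elim: n => [|n IH] H; first by rewrite !cnt0.
rewrite !cntS.
have := IH (fun v vn => H v (ltnW vn)).
have := H n (ltnSn n).
case: (asboolP (A n)) => An; case: (asboolP (B n)) => Bn; case: (asboolP (C n)) => Cn /=;
  try lia.
by move=> /(_ An) [] //.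
Qed.

Lemma cnt_mono (A B : set nat) n :
  (forall v, (v < n)%N -> A v -> B v) -> (cnt A n <= cnt B n)%N.
Proof.
move=> H; have := @cnt_sub2 A B set0 n (fun v vn Av => or_introl (H v vn Av)).
have -> : cnt set0 n = 0%N.
  by rewrite /cnt big1 // => i _; rewrite asboolF.
by rewrite addn0.
Qed.

Lemma cnt_below (A : set nat) X n : (forall v, A v -> (v < X)%N) -> (cnt A n <= X)%N.
Proof.
move=> H; suff : (cnt A n <= minn n X)%N by move=> h; apply: leq_trans h (geq_minr _ _).
elim: n => [|n IH]; first by rewrite cnt0.
rewrite cntS; case: (asboolP (A n)) => An /=.
  have := H n An; lia.
lia.
Qed.

Lemma dz_bounded (A : set nat) X : (forall v, A v -> (v < X)%N) -> dz A.
Proof.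
move=> H m; exists (m.+1 * X)%N => n hn.
apply: leq_trans hn; rewrite leq_mul2l; apply/orP; right; exact: cnt_below.
Qed.

Lemma dz_union (A B C : set nat) : dz B -> dz C ->
  (forall v, A v -> B v \/ C v) -> dz A.
Proof.
move=> hB hC H m.
have [N1 h1] := hB (m.*2.+1); have [N2 h2] := hC (m.*2.+1).
exists (maxn N1 N2) => n hn.
have e1 := h1 n (leq_trans (leq_maxl _ _) hn).
have e2 := h2 n (leq_trans (leq_maxr _ _) hn).
have e3 := @cnt_sub2 A B C n (fun v _ => H v).
nia.
Qed.

Lemma dz_mono (A B : set nat) : dz B -> (forall v, A v -> B v) -> dz A.
Proof.
move=> hB H; apply: (@dz_union A B B hB hB) => v /H; by left.
Qed.

Lemma dz_bigcup (I : eqType) (s : seq I) (F : I -> set nat) :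
  (forall i, i \in s -> dz (F i)) -> dz [set v | exists i, i \in s /\ F i v].
Proof.
elim: s => [|x s IH] H.
  by apply: (@dz_bounded _ 0) => v [i []].
have h1 := H x (mem_head _ _).
have h2 : dz [set v | exists i, i \in s /\ F i v].
  by apply: IH => i iS; apply: H; rewrite in_cons iS orbT.
apply: (dz_union h1 h2) => v.
move=> [i []]; rewrite in_cons => /orP [/eqP -> | iS] Fv; first by left.
by right; exists i.
Qed.

Lemma dz_ndz_neg (B : set nat) : ~ dz B ->
  exists m : nat, forall N, exists t, (N <= t)%N /\ (t < m.+1 * cnt B t)%N.
Proof.
move=> H; apply: contra_notP H => H m.
apply: contra_notP H => H; exists m => N.
apply: contra_notP H => H; exists N => n Nn.
rewrite leqNgt; apply/negP => h; apply: H; exists n; split => //.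
Qed.

End Part_S2.

Section Part_S3.

Local Open Scope classical_set_scope.

Lemma inCE k (f : k.-tuple nat -> nat) :
  inC f <-> (0 < k)%N /\ forall A, dz A -> dz (fimage f A).
Proof.
rewrite /inC; split => [[k0 H]|[k0 H]]; split => // A.
  by move=> /dbar0_dz /H /dbar0_dz.
by move=> /dbar0_dz /H /dbar0_dz.
Qed.

Lemma shadowE k (f : k.-tuple nat -> nat) (pi : 'S_k) l (a : l.-tuple nat) y :
  shadow f pi a y = f [tuple nth 0%N (a ++ y) (pi i) | i < k].
Proof.
rewrite /shadow /fperm; congr f; apply: eq_mktuple => i.
by rewrite tnth_mktuple.
Qed.

Lemma inC_cast n n' (e : n = n') (g : n.-tuple nat -> nat) (g' : n'.-tuple nat -> nat) :
  (forall y, g y = g' (tcast e y)) -> (inC g <-> inC g').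
Proof.
case: n' / e g' => g' H.
have -> : g = g' by apply: funext => y; rewrite H tcast_id.
by [].
Qed.

Lemma shadow_inC k (f : k.-tuple nat -> nat) (pi : 'S_k) l (a : l.-tuple nat) :
  (l < k)%N -> inC f -> inC (shadow f pi a).
Proof.
move=> lk /inCE [k0 H]; apply/inCE; split; first by rewrite subn_gt0.
move=> A dA.
have dA' : dz [set v | A v \/ v \in (a : seq nat)].
  have hb : dz [set v | v \in (a : seq nat)].
    apply: (@dz_bounded _ (\sum_(x <- a) x).+1).
    move=> v /= va; rewrite ltnS.
    elim: (a : seq nat) va => [//|x s IH]; rewrite in_cons big_cons => /orP [/eqP ->|vs].
      exact: leq_addr.
    by apply: leq_trans (IH vs) (leq_addl _ _).
  apply: (dz_union dA hb) => v; exact: id.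
apply: (dz_mono (H _ dA')) => v [y [yA <-]].
rewrite shadowE.
exists [tuple nth 0%N (a ++ y) (pi i) | i < k]; split => //.
move=> i; rewrite tnth_mktuple /=.
have : nth 0%N (a ++ y) (pi i) \in (a ++ y : seq nat).
  by apply: mem_nth; rewrite size_cat !size_tuple (subnKC (ltnW lk)).
rewrite mem_cat => /orP [va|vy]; first by right.
left; move/tnthP: vy => [j ->]; exact: yA.
Qed.

End Part_S3.

Section Part_S4.

Local Open Scope classical_set_scope.

Lemma shadow_comp k (f : k.-tuple nat -> nat) (pi : 'S_k) l (a : l.-tuple nat)
  (sigma : 'S_(k - l)) l' (b : l'.-tuple nat) :
  (l' < k - l)%N ->
  exists pi2 : 'S_k, forall y, shadow (shadow f pi a) sigma b y =
     shadow f pi2 [tuple of a ++ b] (tcast (esym (subnDA l k l')) y).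
Proof.
move=> hl'.
have lk : (l < k)%N by have := hl'; lia.
pose j0 : 'I_(k - l) := Ordinal (leq_ltn_trans (leq0n l') hl').
pose rf (p : 'I_k) : 'I_k := insubd p
   (if (p < l)%N then nat_of_ord p else l + nat_of_ord (sigma (insubd j0 (p - l))))%N.
have rfv p : val (rf p) =
   (if (p < l)%N then nat_of_ord p else l + nat_of_ord (sigma (insubd j0 (p - l))))%N.
  rewrite /rf insubdK //; case: ifP => _; first exact: ltn_ord.
  have := ltn_ord (sigma (insubd j0 (p - l))); lia.
have sv (p : 'I_k) : (l <= p)%N -> nat_of_ord (insubd j0 (p - l)) = (p - l)%N.
  move=> lp; rewrite insubdK //; have := ltn_ord p; lia.
have rinj : injective rf.
  move=> p q /(congr1 val); rewrite !rfv.
  case: ifP => pl; case: ifP => ql => h; apply: val_inj => /=.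
  - exact: h.
  - by move: pl; rewrite h ltnNge leq_addr.
  - by move: ql; rewrite -h ltnNge leq_addr.
  - have : sigma (insubd j0 (p - l)) = sigma (insubd j0 (q - l)).
      by apply: val_inj => /=; apply/eqP; rewrite -(eqn_add2l l) h.
    move/perm_inj/(congr1 (@nat_of_ord _)).
    have lp : (l <= p)%N by rewrite leqNgt pl.
    have lq : (l <= q)%N by rewrite leqNgt ql.
    rewrite (sv _ lp) (sv _ lq) => e.
    by rewrite -(subnK lp) -(subnK lq) e.
pose rho := perm rinj.
exists (pi * rho)%g => y.
rewrite !shadowE; congr f; apply: eq_mktuple => i.
rewrite permM permE rfv.
set p := pi i.
rewrite /= (val_tcast (esym (subnDA l k l')) y) -catA.
case: ifP => pl; first by rewrite !nth_cat size_tuple pl.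
have lp : (l <= p)%N by rewrite leqNgt pl.
set q := insubd j0 (p - l).
have h1 : (l + sigma q < l)%N = false by rewrite ltnNge leq_addr.
rewrite [LHS]nth_cat [RHS]nth_cat !size_tuple pl h1 addKn.
have -> : (p - l)%N = q by rewrite /q sv.
by rewrite nth_mktuple.
Qed.

End Part_S4.

Section Part_S5.

Local Open Scope classical_set_scope.

Lemma shadow_id k (f : k.-tuple nat -> nat) y :
  shadow f 1%g [tuple] y = f (tcast (subn0 k) y).
Proof.
rewrite shadowE; congr f; apply: eq_from_tnth => i.
by rewrite tnth_mktuple perm1 tcastE /= (tnth_nth 0%N).
Qed.

Lemma exists_minimal k (f : k.-tuple nat -> nat) : (0 < k)%N ->
  ~ inC f -> some_shadow minimal f.
Proof.
move=> k0 nf.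
pose S l := (l < k)%N /\ exists (pi : 'S_k) (a : l.-tuple nat), ~ inC (shadow f pi a).
have S0 : S 0%N.
  split => //; exists 1%g, [tuple] => h; apply: nf.
  exact: (proj1 (inC_cast (@shadow_id k f)) h).
have [l [Sl lmax]] : exists l, S l /\ forall l', (l < l')%N -> ~ S l'.
  apply: contrapT => H.
  have : forall j, exists l, (j <= l)%N /\ S l.
    elim => [|j [l [jl Sl]]]; first by exists 0%N.
    apply: contrapT => H2; apply: H; exists l; split => // l' ll' Sl'.
    by apply: H2; exists l'; split => //; apply: leq_trans ll'.
  by move=> /(_ k) [l [kl [lk _]]]; move: kl; rewrite leqNgt lk.
case: Sl => lk [pi [a ng]].
exists l, pi, a; split => //; split => // l' sigma b /andP [l0 hl'].
apply: contrapT => nh.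
have [pi2 E] := shadow_comp f pi a sigma b hl'.
apply: (lmax (l + l')%N); first by rewrite -{1}(addn0 l) ltn_add2l.
split; first by move: hl'; clear; lia.
exists pi2, [tuple of a ++ b] => h; apply: nh.
exact: (proj2 (inC_cast E) h).
Qed.

End Part_S5.

Section Part_S6.

Local Open Scope classical_set_scope.

Lemma rat_le (c r i : nat) : (c%:R <= r%:R / (2 ^ i)%:R :> rat)%R -> (2 ^ i * c <= r)%N.
Proof.
rewrite ler_pdivlMr ?ltr0n ?expn_gt0 // -natrM ler_nat mulnC; exact.
Qed.

Lemma rat_lt (eps : rat) (m t c : nat) : (0 < eps)%R -> (eps^-1 < m.+1%:R)%R ->
  (eps * t%:R <= c%:R)%R -> (0 < t)%N -> (t < m.+1 * c)%N.
Proof.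
move=> e0 em ec t0.
have h : (1 < eps * m.+1%:R)%R.
  have h : (eps * eps^-1 < eps * m.+1%:R)%R by rewrite ltr_pM2l.
  by rewrite mulfV ?gt_eqF // in h.
rewrite -(ltr_nat rat) natrM.
have t0' : (0 < (t%:R : rat))%R by rewrite ltr0n.
apply: (@lt_le_trans _ _ (eps * t%:R * m.+1%:R)%R).
  by rewrite mulrAC -[X in (X < _)%R]mul1r ltr_pM2r.
rewrite mulrC; apply: ler_wpM2l => //.
Qed.

Fixpoint Iseq (N : nat -> nat) (j : nat) : nat :=
  if j is j'.+1 then (2 ^ j * (N (Iseq N j') + Iseq N j' + 1))%N else 1%N.

Lemma Iseq_step N j : (N (Iseq N j) + Iseq N j < Iseq N j.+1)%N.
Proof.
by rewrite /= addn1; apply: leq_pmull; rewrite expn_gt0.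
Qed.

Lemma Iseq_lt N j : (Iseq N j < Iseq N j.+1)%N.
Proof. apply: leq_ltn_trans (Iseq_step N j); exact: leq_addl. Qed.

Lemma Iseq_mono N j1 j2 : (j1 <= j2)%N -> (Iseq N j1 <= Iseq N j2)%N.
Proof.
move=> h; rewrite -(subnKC h); elim: (j2 - j1)%N => [|d IH]; first by rewrite addn0.
by rewrite addnS; apply: leq_trans IH (ltnW (Iseq_lt _ _)).
Qed.

Lemma Iseq_gt N j : (j < Iseq N j)%N.
Proof.
elim: j => [//|j IH]; apply: leq_ltn_trans (Iseq_lt N j); exact: IH.
Qed.

Lemma bracket (u : nat -> nat) : (forall j, u j < u j.+1)%N ->
  forall J r, (u J < r)%N -> exists j, [/\ (J <= j)%N, (u j < r)%N & (r <= u j.+1)%N].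
Proof.
move=> hu.
have ge j : (j <= u j)%N.
  elim: j => [//|j IH]; apply: leq_ltn_trans IH (hu j).
suff H : forall d J r, (u J < r)%N -> (r <= u (J + d))%N ->
    exists j, [/\ (J <= j)%N, (u j < r)%N & (r <= u j.+1)%N].
  move=> J r h; apply: (H r J r h); apply: leq_trans (ge _); exact: leq_addl.
elim => [|d IH] J r h1 h2.
  by move: h2; rewrite addn0 leqNgt h1.
case: (leqP r (u J.+1)) => h3; first by exists J.
have h7 : (r <= u (J.+1 + d))%N by rewrite addSnnS.
have [j [h4 h5 h6]] := IH J.+1 r h3 h7.
by exists j; split => //; apply: ltnW.
Qed.

Lemma arith1 (c X s P Q r M : nat) : (c <= X + s)%N -> (P * X <= r)%N ->
  (Q * s <= r)%N -> (P <= Q)%N -> (M.*2 <= P)%N -> (M * c <= r)%N.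
Proof. move=> h1 h2 h3 h4 h5; nia. Qed.

Lemma fimage_mono n (g : n.-tuple nat -> nat) (A B : set nat) :
  (forall x, A x -> B x) -> forall v, fimage g A v -> fimage g B v.
Proof. by move=> H v [x [xA <-]]; exists x; split => // i; apply: H. Qed.

End Part_S6.

Section Part_S7.

Local Open Scope classical_set_scope.

Lemma bad_notC n (g : n.-tuple nat -> nat) : bad g -> ~ inC g.
Proof.
move=> [eps [eps0 H]] /inCE [n0 Hg].
have H' : forall i, exists p : nat * nat * set nat,
   [/\ (i <= p.1.1)%N, (i <= p.1.2)%N,
       (forall x, p.2 x -> (i <= x < p.1.1)%N),
       (forall r : nat, ((cnt p.2 r)%:R <= r%:R / (2 ^ i)%:R :> rat)%R) &
       (eps * p.1.2%:R <= (cnt (fimage g p.2) p.1.2)%:R)%R].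
  by move=> i; have [nn [t [A h]]] := H i; exists (nn, t, A).
have [F HF] := choice H'.
pose NN i := (F i).1.1; pose TT i := (F i).1.2; pose SS i := (F i).2.
pose I := Iseq NN.
pose A := [set x | exists j, SS (I j) x].
have SSr j x : SS (I j) x -> (I j <= x < NN (I j))%N.
  by have [_ _ h _ _] := HF (I j); apply: h.
have dA : dz A.
  move=> m.
  exists (I (m.*2.+2)).+1 => r hr.
  have [j [hJ h1 h2]] := bracket (@Iseq_lt NN) hr.
  have [j1 ej] : exists j1, j = j1.+1.
    by case: j hJ {h1 h2} => [//|j1 _]; exists j1.
  set X := (NN (I j1) + I j1)%N.
  have hc : (cnt A r <= cnt [set v | (v < X)%N] r + cnt (SS (I j)) r)%N.
    apply: cnt_sub2 => v vr [j' Sv].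
    have := SSr _ _ Sv => /andP [v1 v2].
    case: (ltngtP j' j) => hj.
    - left => /=.
      apply: (leq_trans v2).
      case: (ltngtP j' j1) => hj1.
      + have a1 := Iseq_step NN j'; have a2 := Iseq_mono NN hj1.
        rewrite /X -/I; move: a1 a2; rewrite -/I.
        move: (NN (I j')) (I j') (I j'.+1) (I j1) (NN (I j1)); clear; lia.
      + by move: hj; rewrite ej ltnS leqNgt hj1.
      + by rewrite hj1 leq_addr.
    - exfalso; move: vr; rewrite ltnNge; apply/negP/negPn.
      apply: leq_trans h2 _; apply: leq_trans (Iseq_mono _ hj) v1.
    - by right; rewrite -hj.
  have hX : (cnt [set v | (v < X)%N] r <= X)%N by apply: cnt_below.
  have hs : (2 ^ I j * cnt (SS (I j)) r <= r)%N.
    by have [_ _ _ h _] := HF (I j); apply: rat_le; apply: h.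
  have hP : (2 ^ j * X <= r)%N.
    apply: ltnW; apply: leq_ltn_trans h1; rewrite ej /= -/I.
    by rewrite leq_mul2l; apply/orP; right; rewrite -/X leq_addr.
  apply: (arith1 (leq_trans hc (leq_add hX (leqnn _))) hP hs).
    by rewrite leq_exp2l //; apply: ltnW; apply: Iseq_gt.
  apply: (leq_trans _ (ltnW (ltn_expl j (isT : (1 < 2)%N)))).
  by rewrite doubleS.
have dI := Hg A dA.
pose m := Num.Def.trunc (eps^-1).
have em : (eps^-1 < m.+1%:R)%R by apply: truncnS_gt.
have [N hN] := dI m.*2.+1.
have [_ hit _ _ he] := HF (I N).
set t := (F (I N)).1.2 in hit he.
have hNt : (N < t)%N by apply: leq_trans (Iseq_gt NN N) hit.
have hcc : (cnt (fimage g (F (I N)).2) t <= cnt (fimage g A) t)%N.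
  apply: cnt_mono => v _; apply: fimage_mono => x Sx; by exists N.
have h1 := rat_lt eps0 em he (leq_ltn_trans (leq0n _) hNt).
have h2 := hN t (ltnW hNt).
move: h1 h2 hcc hNt; clear; nia.
Qed.

End Part_S7.

Section Part_S8.

Local Open Scope classical_set_scope.

Lemma cnt_set0 n : cnt set0 n = 0%N.
Proof. by rewrite /cnt big1 // => i _; rewrite asboolF. Qed.

Lemma rat_ge (t d c : nat) : (0 < d)%N -> (t <= d * c)%N ->
  ((d%:R)^-1 * t%:R <= c%:R :> rat)%R.
Proof.
move=> d0 h; rewrite mulrC ler_pdivrMr ?ltr0n // -natrM ler_nat mulnC; exact.
Qed.

Lemma trunc_lemma n (g : n.-tuple nat -> nat) (A' : set nat) t :
  exists n1, forall n2, (n1 <= n2)%N -> forall v, (v < t)%N -> fimage g A' v ->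
    fimage g [set x | A' x /\ (x < n2)%N] v.
Proof.
elim: t => [|t [n1 IH]]; first by exists 0%N.
case: (pselect (fimage g A' t)) => [[x [xA gx]]|nt].
  exists (maxn n1 (\max_(j < n) tnth x j).+1) => n2 hn2 v.
  rewrite ltnS leq_eqVlt => /orP [/eqP ->|vt] hv.
    exists x; split => // j; split => //.
    apply: leq_trans hn2; apply: leq_trans (leq_maxr _ _); rewrite ltnS.
    by apply: (@leq_bigmax _ (fun j => tnth x j)).
  by apply: IH => //; apply: leq_trans hn2; exact: leq_maxl.
exists n1 => n2 hn2 v; rewrite ltnS leq_eqVlt => /orP [/eqP ->|vt] hv //.
by apply: IH.
Qed.

Lemma arith2 (b b' cc t M : nat) : (b <= b' + cc)%N -> (t < M * b)%N ->
  (M.*2 * cc <= t)%N -> (t <= M.*2 * b')%N.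
Proof. move=> *; nia. Qed.

Lemma D_dz n (g : n.-tuple nat -> nat) (A : set nat) (n0 : (0 < n)%N) :
  (forall (l : nat) (pi : 'S_n) (a : l.-tuple nat), (0 < l < n)%N -> inC (shadow g pi a)) ->
  dz A -> forall (j : 'I_n) c,
  dz [set v | exists x : n.-tuple nat, [/\ (forall i, A (tnth x i)), tnth x j = c & g x = v]].
Proof.
move=> hmin dA j c.
case: (ltngtP n 1) => hn.
- by move: n0; rewrite lt0n; move: hn; rewrite ltnS leqn0 => ->.
- pose j0 : 'I_n := Ordinal n0.
  have := hmin 1%N (tperm j0 j) [tuple c]; rewrite hn /= => /(_ isT) /inCE [_ h].
  apply: (dz_mono (h A dA)) => v [x [xA xj <-]].
  exists [tuple tnth x (tperm j0 j (insubd j0 p.+1)) | p < n - 1]; split.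
    by move=> p; rewrite tnth_mktuple.
  set y := [tuple tnth x (tperm j0 j (insubd j0 p.+1)) | p < n - 1].
  rewrite shadowE; congr g; apply: eq_from_tnth => i; rewrite tnth_mktuple.
  set q := tperm j0 j i.
  have iq : i = tperm j0 j q by rewrite /q tpermK.
  case: (posnP q) => hq.
    have qj : q = j0 by apply: val_inj.
    have ij : i = j by rewrite iq qj tpermL.
    by rewrite qj ij xj.
  have hp : (q.-1 < n - 1)%N by have := ltn_ord q; move: hq; clear; lia.
  have -> : nat_of_ord q = q.-1.+1 by rewrite prednK.
  rewrite (_ : nth 0%N ([tuple c] ++ y) q.-1.+1 = nth 0%N y q.-1) //.
  rewrite -(tnth_nth 0%N y (Ordinal hp)) tnth_mktuple.
  have -> : insubd j0 (Ordinal hp).+1 = q.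
    apply: val_inj; rewrite /= prednK // insubdK //; exact: ltn_ord.
  by rewrite -iq.
- apply: (@dz_bounded _ (g [tuple c | _ < n]).+1) => v [x [_ xj <-]].
  suff -> : x = [tuple c | _ < n] by [].
  apply: eq_from_tnth => i.
  rewrite tnth_mktuple -xj; congr tnth; apply: val_inj.
  change (nat_of_ord i = nat_of_ord j).
  have hi : (i < 1)%N by rewrite -hn ltn_ord.
  have hj : (j < 1)%N by rewrite -hn ltn_ord.
  by move: hi hj; rewrite !ltnS !leqn0 => /eqP -> /eqP ->.
Qed.

End Part_S8.

Section Part_S9.

Local Open Scope classical_set_scope.

Lemma minimal_bad n (g : n.-tuple nat -> nat) : (0 < n)%N -> minimal g -> bad g.
Proof.
move=> n0 [ng hmin].
have [A [dA ndB]] : exists A, dz A /\ ~ dz (fimage g A).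
  apply: contrapT => H; apply: ng; apply/inCE; split => // A dA.
  apply: contrapT => nd; apply: H; by exists A.
have [m hm] := dz_ndz_neg ndB.
pose D (j : 'I_n) c := [set v | exists x : n.-tuple nat,
   [/\ (forall i, A (tnth x i)), tnth x j = c & g x = v]].
have dD j c : dz (D j c) by apply: D_dz.
exists (((m.+1).*2)%:R^-1 : rat)%R; split.
  by rewrite invr_gt0 ltr0n.
move=> i.
have [M0 hM0] := dA (2 ^ i).-1.
rewrite prednK ?expn_gt0 // in hM0.
pose M := maxn M0 i.
pose A' := [set x | A x /\ (M <= x)%N].
pose F (j : 'I_n) := [set v | exists c, c \in iota 0 M /\ D j c v].
pose C := [set v | exists j, j \in enum 'I_n /\ F j v].
have dC : dz C by apply: dz_bigcup => j _; apply: dz_bigcup => c _; apply: dD.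
have hBC : forall v, fimage g A v -> fimage g A' v \/ C v.
  move=> v [x [xA <-]].
  case: (pselect (forall j, (M <= tnth x j)%N)) => h.
    by left; exists x; split => // j; split.
  right.
  have [j hj] : exists j, (tnth x j < M)%N.
    apply: contrapT => H2; apply: h => j; rewrite leqNgt; apply/negP => h3.
    by apply: H2; exists j.
  exists j; split; first by rewrite mem_enum.
  exists (tnth x j); split; first by rewrite mem_iota.
  by exists x.
have [N hN] := dC m.*2.+1.
have [t [ht1 ht2]] := hm (maxn N (maxn i 1)).
have hc := @cnt_sub2 _ _ _ t (fun v _ => hBC v).
have hct := hN t (leq_trans (leq_maxl _ _) ht1).
have key := arith2 hc ht2 hct.
have [n1 hn1] := trunc_lemma g A' t.
pose n2 := maxn n1 i.
pose A'' := [set x | A' x /\ (x < n2)%N].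
exists n2, t, A''; split.
- exact: leq_maxr.
- by move: ht1; clear; lia.
- move=> x [[_ Mx] xn]; rewrite xn andbT.
  by apply: leq_trans Mx; apply: leq_maxr.
- move=> r.
  rewrite ler_pdivlMr ?ltr0n ?expn_gt0 // -natrM ler_nat.
  case: (leqP r M) => hr.
    have : (cnt A'' r <= cnt set0 r + cnt set0 r)%N.
      apply: cnt_sub2 => v vr [[_ Mv] _]; exfalso.
      by move: (leq_trans (leq_trans vr hr) Mv); rewrite ltnn.
    by rewrite cnt_set0 leqn0 => /eqP ->.
  have h1 : (cnt A'' r <= cnt A r)%N by apply: cnt_mono => v _ [[]].
  have h2 := hM0 r (leq_trans (leq_maxl M0 i) (ltnW hr)).
  rewrite mulnC; apply: leq_trans h2; by rewrite leq_mul2l h1 orbT.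
- apply: rat_ge; first by [].
  apply: (leq_trans key); rewrite leq_mul2l; apply/orP; right.
  apply: cnt_mono => v vt hv; apply: (hn1 n2 (leq_maxl _ _) v vt hv).
Qed.

End Part_S9.



Theorem mainTheorem6 (k : nat) (hk : (1 <= k)%N) (f : k.-tuple nat -> nat) :
  (~ inC f <-> some_shadow minimal f) /\
  (~ inC f <-> some_shadow bad f) /\
  (~ inC f <-> some_shadow (fun n g => ~ inC g) f).
Proof.
have H1 : ~ inC f -> some_shadow minimal f := exists_minimal hk.
have H2 : some_shadow (fun n g => ~ inC g) f -> ~ inC f.
  move=> [l [pi [a [lk ng]]]] hf; apply: ng; exact: shadow_inC.
split; [split|split; split].
- exact: H1.
- move=> [l [pi [a [lk [ng _]]]]]; apply: H2; by exists l, pi, a.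
- move/H1 => [l [pi [a [lk hm]]]]; exists l, pi, a; split => //.
  by apply: minimal_bad => //; rewrite subn_gt0.
- move=> [l [pi [a [lk hb]]]]; apply: H2; exists l, pi, a; split => //.
  exact: bad_notC.
- move/H1 => [l [pi [a [lk [ng _]]]]]; by exists l, pi, a.
- exact: H2.
Qed.
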